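(* Let $G$ be a t.d.l.c.s.c. group and $U,V$ compact open subgroups of $G$. Then $F(U)$ and $F(V)$ are commensurate, i.e. $|F(U):F(U)\cap F(V)|<\infty$ and $|F(V):F(U)\cap F(V)|<\infty$. In particular $F(U)$ is commensurated by $G$: for every $g\in G$, $gF(U)g^{-1}$ and $F(U)$ are commensurate.
   Context: t.d.l.c.s.c. = totally disconnected, locally compact, second countable. For a profinite group $U$, the Fitting subgroup $F(U)$ is the closed subgroup generated by all normal pro-nilpotent closed subgroups of $U$ (it is itself the largest normal pro-nilpotent closed subgroup). *)

(* Defs.v *)
From Stdlib Require Import List.
Import ListNotations.
Set Implicit Arguments.

Section TopGroups.
Variable G : Type.
Variables (mul : G -> G -> G) (inv : G -> G) (e : G).
Variable op : (G -> Prop) -> Prop.   (* the open sets of the topology *)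

Definition subset (A B : G -> Prop) : Prop := forall x, A x -> B x.
Definition inter (A B : G -> Prop) : G -> Prop := fun x => A x /\ B x.

Definition group_axioms : Prop :=
  (forall x y z, mul x (mul y z) = mul (mul x y) z) /\
  (forall x, mul e x = x /\ mul x e = x) /\
  (forall x, mul (inv x) x = e /\ mul x (inv x) = e).

Definition topology_axioms : Prop :=
  op (fun _ => True) /\ op (fun _ => False) /\
  (forall A B, op A -> op B -> op (inter A B)) /\
  (forall F : (G -> Prop) -> Prop, (forall A, F A -> op A) ->
      op (fun x => exists A, F A /\ A x)).

Definition closed (A : G -> Prop) : Prop := op (fun x => ~ A x).

Definition mul_continuous : Prop :=
  forall W x y, op W -> W (mul x y) ->
    exists A B, op A /\ op B /\ A x /\ B y /\
      (forall a b, A a -> B b -> W (mul a b)).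
Definition inv_continuous : Prop :=
  forall W, op W -> op (fun x => W (inv x)).

Definition topological_group : Prop :=
  group_axioms /\ topology_axioms /\ mul_continuous /\ inv_continuous.

Definition compact (K : G -> Prop) : Prop :=
  forall F : (G -> Prop) -> Prop, (forall A, F A -> op A) ->
    (forall x, K x -> exists A, F A /\ A x) ->
    exists l : list (G -> Prop), (forall A, In A l -> F A) /\
      (forall x, K x -> exists A, In A l /\ A x).

Definition locally_compact : Prop :=
  forall x, exists K O, compact K /\ op O /\ O x /\ subset O K.

(* connectedness of a subset in the subspace topology *)
Definition connected (S : G -> Prop) : Prop :=
  ~ exists A B, op A /\ op B /\ subset S (fun x => A x \/ B x) /\
      (exists a, S a /\ A a) /\ (exists b, S b /\ B b) /\
      (forall x, S x -> A x -> B x -> False).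

Definition totally_disconnected : Prop :=
  forall S, connected S -> forall x y, S x -> S y -> x = y.

Definition second_countable : Prop :=
  exists B : nat -> (G -> Prop), (forall n, op (B n)) /\
    forall O x, op O -> O x -> exists n, B n x /\ subset (B n) O.

Definition tdlcsc_group : Prop :=
  topological_group /\ totally_disconnected /\ locally_compact /\ second_countable.

Definition subgroup (H : G -> Prop) : Prop :=
  H e /\ (forall x y, H x -> H y -> H (mul x y)) /\ (forall x, H x -> H (inv x)).

Definition normal_in (N U : G -> Prop) : Prop :=
  subgroup N /\ subset N U /\ forall u n, U u -> N n -> N (mul (mul u n) (inv u)).

Definition compact_open_subgroup (U : G -> Prop) : Prop :=
  subgroup U /\ compact U /\ op U.

Definition generated (S : G -> Prop) : G -> Prop :=
  fun x => forall H, subgroup H -> subset S H -> H x.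

Definition closure (S : G -> Prop) : G -> Prop :=
  fun x => forall C, closed C -> subset S C -> C x.

Definition commutator (x y : G) : G := mul (mul (inv x) (inv y)) (mul x y).

(* lower central series of (the abstract group) N: gamma 0 = N,
   gamma (k+1) = < [x,y] : x in gamma k, y in N > *)
Fixpoint lower_central (N : G -> Prop) (k : nat) : G -> Prop :=
  match k with
  | 0 => N
  | S k' => generated (fun z => exists x y, lower_central N k' x /\ N y /\
                                   z = commutator x y)
  end.

(* N / M is nilpotent (M normal in N) *)
Definition quotient_nilpotent (N M : G -> Prop) : Prop :=
  exists k, subset (lower_central N k) M.

Definition rel_open (N M : G -> Prop) : Prop :=
  exists O, op O /\ forall x, M x <-> (O x /\ N x).

(* a closed subgroup N of a profinite group is pro-nilpotent: every quotient
   by an open normal subgroup (a finite continuous quotient) is nilpotent *)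
Definition pronilpotent (N : G -> Prop) : Prop :=
  forall M, normal_in M N -> rel_open N M -> quotient_nilpotent N M.

Definition fitting (U : G -> Prop) : G -> Prop :=
  closure (generated (fun x => exists N, normal_in N U /\ closed N /\
                                  pronilpotent N /\ N x)).

Definition finite_index (H K : G -> Prop) : Prop :=
  exists l : list G, (forall g, In g l -> H g) /\
    forall h, H h -> exists g k, In g l /\ K k /\ h = mul g k.

Definition commensurate (A B : G -> Prop) : Prop :=
  finite_index A (inter A B) /\ finite_index B (inter A B).

(* g A g^-1 *)
Definition conj_set (g : G) (A : G -> Prop) : G -> Prop :=
  fun y => A (mul (mul (inv g) y) g).

End TopGroups.

(* Main.v *)
Require Import Defs.
From Stdlib Require Import List Classical FunctionalExtensionality PropExtensionality Lia.
Import ListNotations.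

Section S.
Variable G : Type.
Variables (mul : G -> G -> G) (inv : G -> G) (e : G) (op : (G -> Prop) -> Prop).
Hypothesis Hgrp : group_axioms mul inv e.
Hypothesis Htop : topology_axioms op.
Hypothesis Hmc : mul_continuous mul op.
Hypothesis Hic : inv_continuous inv op.

Local Infix "**" := mul (at level 40, left associativity).

Lemma massoc x y z : x ** y ** z = x ** (y ** z).
Proof. destruct Hgrp as [H _]. now rewrite H. Qed.
Lemma mul_e_l x : e ** x = x. Proof. apply Hgrp. Qed.
Lemma mul_e_r x : x ** e = x. Proof. apply Hgrp. Qed.
Lemma inv_l x : inv x ** x = e. Proof. apply Hgrp. Qed.
Lemma inv_r x : x ** inv x = e. Proof. apply Hgrp. Qed.
Lemma cancel1 x z : inv x ** (x ** z) = z.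
Proof. now rewrite <- massoc, inv_l, mul_e_l. Qed.
Lemma cancel2 x z : x ** (inv x ** z) = z.
Proof. now rewrite <- massoc, inv_r, mul_e_l. Qed.
Lemma inv_unique x y : x ** y = e -> inv x = y.
Proof. intro H. rewrite <- (mul_e_r (inv x)), <- H. now rewrite cancel1. Qed.
Lemma inv_inv x : inv (inv x) = x.
Proof. apply inv_unique, inv_l. Qed.
Lemma inv_mul x y : inv (x ** y) = inv y ** inv x.
Proof. apply inv_unique. rewrite !massoc, cancel2. apply inv_r. Qed.
Lemma inv_e : inv e = e.
Proof. apply inv_unique, mul_e_l. Qed.

Ltac grp := repeat (rewrite ?massoc, ?inv_mul, ?inv_inv, ?inv_e, ?cancel1, ?cancel2,
   ?mul_e_l, ?mul_e_r, ?inv_l, ?inv_r); try reflexivity.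


Local Notation sg := (subgroup mul inv e).
Local Notation gen := (generated mul inv e).
Local Notation lc := (lower_central mul inv e).
Local Notation nin := (normal_in mul inv e).
Local Notation comm := (commutator mul inv).
Local Notation cl := (closure op).
Local Notation pronil := (pronilpotent mul inv e op).
Local Notation fit := (fitting mul inv e op).
Local Notation fi := (finite_index mul).

Lemma set_ext (A B : G -> Prop) : (forall x, A x <-> B x) -> A = B.
Proof. intro H. apply functional_extensionality; intro x. apply propositional_extensionality, H. Qed.

Lemma sg_e H : sg H -> H e. Proof. now intros [? ?]. Qed.
Lemma sg_mul H x y : sg H -> H x -> H y -> H (x ** y). Proof. intros [_ [h _]]; auto. Qed.
Lemma sg_inv H x : sg H -> H x -> H (inv x). Proof. intros [_ [_ h]]; auto. Qed.
Lemma sg_inv_iff H x : sg H -> (H (inv x) <-> H x).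
Proof. intros h; split; intro. rewrite <- inv_inv. now apply sg_inv. now apply sg_inv. Qed.

Lemma sg_inter A B : sg A -> sg B -> sg (inter A B).
Proof.
  intros hA hB; split; [|split]; unfold inter.
  - split; now apply sg_e.
  - intros x y [] []; split; now apply sg_mul.
  - intros x []; split; now apply sg_inv.
Qed.

Lemma gen_sg S : sg (gen S).
Proof.
  split; [|split]; unfold generated.
  - intros H hH _. now apply sg_e.
  - intros x y hx hy H hH hS. apply (sg_mul H); auto. now apply hx. now apply hy.
  - intros x hx H hH hS. apply (sg_inv H); auto. now apply hx.
Qed.
Lemma gen_incl S : subset S (gen S).
Proof. intros x hx H _ hS. auto. Qed.
Lemma gen_min S H : sg H -> subset S H -> subset (gen S) H.
Proof. intros hH hS x hx. apply hx; auto. Qed.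
Lemma gen_mono S T : subset S T -> subset (gen S) (gen T).
Proof. intros h. apply gen_min. apply gen_sg. intros x hx. apply gen_incl; auto. Qed.

Lemma lc_sg N k : sg N -> sg (lc N k).
Proof. intro h. destruct k; simpl; auto using gen_sg. Qed.

Lemma lc_sub N k : sg N -> subset (lc N k) N.
Proof.
  intro h. induction k; simpl. intros x hx; auto.
  apply gen_min; auto. intros z (x & y & hx & hy & ->). unfold commutator.
  apply IHk in hx. apply sg_mul; auto; apply sg_mul; auto; apply sg_inv; auto.
Qed.

Lemma lc_mono A B k : subset A B -> subset (lc A k) (lc B k).
Proof.
  intro h. induction k; simpl; auto.
  apply gen_mono. intros z (x & y & hx & hy & ->). exists x, y; auto.
Qed.

Lemma lc_dec N k : sg N -> subset (lc N (S k)) (lc N k).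
Proof.
  intro h. induction k. apply lc_sub; auto.
  simpl. apply gen_mono. intros z (x & y & hx & hy & ->). exists x, y; auto.
Qed.

Lemma lc_anti N i j : sg N -> i <= j -> subset (lc N j) (lc N i).
Proof.
  intros h hij. induction hij. intros x; auto.
  intros x hx. apply IHhij, lc_dec; auto.
Qed.

Definition cinv (u : G) (S : G -> Prop) := forall x, S x -> S (u ** x ** inv u).

Lemma gen_cinv u S : cinv u S -> cinv u (gen S).
Proof.
  intros h x hx. set (K := fun x => gen S (u ** x ** inv u)).
  assert (sg K). { unfold K; split; [|split].
    - grp. apply (sg_e (gen S)), gen_sg.
    - intros a b ha hb. replace (u ** (a ** b) ** inv u) with ((u ** a ** inv u) ** (u ** b ** inv u)) by grp.
      apply sg_mul; auto using gen_sg.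
    - intros a ha. replace (u ** inv a ** inv u) with (inv (u ** a ** inv u)) by grp.
      apply sg_inv; auto using gen_sg. }
  apply (gen_min S K); auto. intros y hy. unfold K. apply gen_incl; auto.
Qed.

Lemma comm_conj u x y : u ** comm x y ** inv u = comm (u ** x ** inv u) (u ** y ** inv u).
Proof. unfold commutator. grp. Qed.

Lemma lc_cinv u N k : sg N -> cinv u N -> cinv u (lc N k).
Proof.
  intros hN hu. induction k; simpl; auto.
  apply gen_cinv. intros z (x & y & hx & hy & ->). rewrite comm_conj.
  do 2 eexists; split; [|split]; [apply IHk; eauto | apply hu; eauto | reflexivity].
Qed.

Lemma nin_cinv N U u : nin N U -> U u -> cinv u N.
Proof. intros [_ [_ h]] hu x hx; auto. Qed.

Lemma lc_nin N U k : nin N U -> nin (lc N k) U.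
Proof.
  intros hN. destruct hN as [h1 [h2 h3]]. split; [|split].
  - apply lc_sg; auto.
  - intros x hx. apply h2. eapply lc_sub; eauto.
  - intros u n hu hn. apply (lc_cinv u N k h1); auto. intros x hx; auto.
Qed.

Lemma op_True : op (fun _ => True). Proof. apply Htop. Qed.
Lemma op_inter A B : op A -> op B -> op (inter A B). Proof. apply Htop. Qed.
Lemma op_union (F : (G -> Prop) -> Prop) : (forall A, F A -> op A) -> op (fun x => exists A, F A /\ A x).
Proof. apply Htop. Qed.

Lemma open_nbhd S : (forall x, S x -> exists O, op O /\ O x /\ subset O S) -> op S.
Proof.
  intro h. assert (S = fun x => exists A, (op A /\ subset A S) /\ A x) as ->.
  { apply set_ext; intro x; split.
    - intro hx. destruct (h x hx) as (O & ? & ? & ?). exists O; auto.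
    - intros (A & [_ hA] & hx). auto. }
  apply op_union. intros A []; auto.
Qed.

Lemma op_lmul a W : op W -> op (fun x => W (a ** x)).
Proof.
  intro hW. apply open_nbhd. intros x hx.
  destruct (Hmc W a x hW hx) as (A & B & hA & hB & ha & hb & h).
  exists B; repeat split; auto. intros y hy. auto.
Qed.
Lemma op_rmul a W : op W -> op (fun x => W (x ** a)).
Proof.
  intro hW. apply open_nbhd. intros x hx.
  destruct (Hmc W x a hW hx) as (A & B & hA & hB & ha & hb & h).
  exists A; repeat split; auto. intros y hy. auto.
Qed.
Lemma op_conj a b W : op W -> op (fun x => W (a ** x ** b)).
Proof. intro hW. apply (op_lmul a (fun z => W (z ** b))). now apply op_rmul. Qed.

Definition cont2 (f : G -> G -> G) := forall W x y, op W -> W (f x y) ->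
  exists A B, op A /\ op B /\ A x /\ B y /\ forall a b, A a -> B b -> W (f a b).

Lemma cont2_fst : cont2 (fun x y => x).
Proof. intros W x y hW hx. exists W, (fun _ => True). repeat split; auto using op_True. Qed.
Lemma cont2_snd : cont2 (fun x y => y).
Proof. intros W x y hW hx. exists (fun _ => True), W. repeat split; auto using op_True. Qed.
Lemma cont2_inv f : cont2 f -> cont2 (fun x y => inv (f x y)).
Proof. intros hf W x y hW hx. apply (hf (fun z => W (inv z))); auto. Qed.
Lemma cont2_mul f g : cont2 f -> cont2 g -> cont2 (fun x y => f x y ** g x y).
Proof.
  intros hf hg W x y hW hx.
  destruct (Hmc W _ _ hW hx) as (A0 & B0 & hA0 & hB0 & ha0 & hb0 & h0).
  destruct (hf A0 x y hA0 ha0) as (A1 & B1 & ? & ? & ? & ? & h1).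
  destruct (hg B0 x y hB0 hb0) as (A2 & B2 & ? & ? & ? & ? & h2).
  exists (inter A1 A2), (inter B1 B2). repeat split; auto using op_inter.
  intros a b [] []. auto.
Qed.
Lemma cont2_comm : cont2 (fun x y => comm x y).
Proof.
  unfold commutator. apply cont2_mul; apply cont2_mul;
  auto using cont2_inv, cont2_fst, cont2_snd.
Qed.

Lemma cl_char S x : cl S x <-> forall O, op O -> O x -> exists y, S y /\ O y.
Proof.
  split.
  - intros h O hO hx. apply NNPP; intro hn.
    assert (hC : closed op (fun z => ~ O z)).
    { unfold closed. replace (fun z => ~ ~ O z) with O; auto.
      apply set_ext; intro z; destruct (classic (O z)); tauto. }
    apply (h _ hC); auto. intros y hy hOy. apply hn. eauto.
  - intros h C hC hS. apply NNPP; intro hn.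
    destruct (h _ hC hn) as (y & hy & hy'). auto.
Qed.

Lemma sub_cl S : subset S (cl S). Proof. intros x hx C _ h. auto. Qed.
Lemma cl_min S C : closed op C -> subset S C -> subset (cl S) C.
Proof. intros hC h x hx. apply hx; auto. Qed.
Lemma cl_mono S T : subset S T -> subset (cl S) (cl T).
Proof. intros h x hx C hC hT. apply hx; auto. intros y hy; auto. Qed.
Lemma closed_cl S : closed op (cl S).
Proof.
  unfold closed. apply open_nbhd. intros x hx.
  assert (exists O, op O /\ O x /\ forall y, S y -> O y -> False) as (O & hO & hOx & hd).
  { apply NNPP; intro hn. apply hx. apply cl_char. intros O hO hOx.
    apply NNPP; intro hn2. apply hn. exists O; repeat split; auto. intros y hy hy'. eauto. }
  exists O; repeat split; auto. intros y hy hcl.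
  destruct (proj1 (cl_char S y) hcl O hO hy) as (z & ? & ?). eauto.
Qed.
Lemma closed_inter A B : closed op A -> closed op B -> closed op (inter A B).
Proof.
  unfold closed, inter. intros hA hB.
  assert ((fun x => ~ (A x /\ B x)) = fun x => exists C, (C = (fun x => ~ A x) \/ C = (fun x => ~ B x)) /\ C x) as ->.
  { apply set_ext; intro x; split.
    - intro h. destruct (classic (A x)).
      + exists (fun x => ~ B x); split; [right; reflexivity | tauto].
      + exists (fun x => ~ A x); split; [left; reflexivity | tauto].
    - intros (C & [-> | ->] & h); tauto. }
  apply op_union. intros C [-> | ->]; auto.
Qed.

Lemma open_sg_closed W : sg W -> op W -> closed op W.
Proof.
  intros hW hO. unfold closed. apply open_nbhd. intros x hx.
  exists (fun y => W (inv x ** y)). repeat split.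
  - now apply op_lmul.
  - now rewrite inv_l; apply sg_e.
  - intros y hy hy'. apply hx. replace x with (y ** inv (inv x ** y)) by grp.
    apply sg_mul; auto. apply sg_inv; auto.
Qed.

Lemma cl_sg S : sg S -> sg (cl S).
Proof.
  intro hS. split; [|split].
  - apply sub_cl, sg_e; auto.
  - intros x y hx hy. apply cl_char. intros O hO hxy.
    destruct (Hmc O x y hO hxy) as (A & B & hA & hB & ha & hb & h).
    destruct (proj1 (cl_char S x) hx A hA ha) as (a & ? & ?).
    destruct (proj1 (cl_char S y) hy B hB hb) as (b & ? & ?).
    exists (a ** b). split; auto. apply sg_mul; auto.
  - intros x hx. apply cl_char. intros O hO hix.
    destruct (proj1 (cl_char S x) hx (fun z => O (inv z)) (Hic O hO) hix) as (a & ? & ?).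
    exists (inv a). split; auto. apply sg_inv; auto.
Qed.

Lemma cl_nin N X : nin N X -> closed op X -> nin (cl N) X.
Proof.
  intros [h1 [h2 h3]] hX. split; [|split].
  - apply cl_sg; auto.
  - apply cl_min; auto.
  - intros u n hu hn. apply cl_char. intros O hO hx.
    destruct (proj1 (cl_char N n) hn (fun z => O (u ** z ** inv u)) (op_conj _ _ _ hO) hx) as (a & ? & ?).
    exists (u ** a ** inv u). auto.
Qed.

Lemma cl_inter_open S W x : cl S x -> op W -> W x -> cl (inter S W) x.
Proof.
  intros hx hW hWx. apply cl_char. intros O hO hOx.
  destruct (proj1 (cl_char S x) hx (inter O W) (op_inter _ _ hO hW)) as (y & ? & [? ?]).
  split; auto. exists y. split; auto. split; auto.
Qed.

Lemma lc_cl S k : sg S -> subset (lc (cl S) k) (cl (lc S k)).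
Proof.
  intro hS. induction k; simpl. intros x hx; auto.
  apply gen_min. apply cl_sg, gen_sg.
  intros z (x & y & hx & hy & ->). apply IHk in hx. apply cl_char. intros O hO hc.
  destruct (cont2_comm O x y hO hc) as (A & B & hA & hB & ha & hb & h).
  destruct (proj1 (cl_char _ x) hx A hA ha) as (a & ? & ?).
  destruct (proj1 (cl_char S y) hy B hB hb) as (b & ? & ?).
  exists (comm a b). split; auto. apply gen_incl. exists a, b; auto.
Qed.

Lemma fi_compact X B : compact op X -> sg B -> op B -> fi X B.
Proof.
  intros hX hB hBo.
  set (F := fun C => exists x, X x /\ C = (fun y => B (inv x ** y))).
  destruct (hX F) as (l & hl & hcov).
  - intros C (x & _ & ->). now apply op_lmul.
  - intros x hx. exists (fun y => B (inv x ** y)). split. exists x; auto.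
    rewrite inv_l. now apply sg_e.
  - assert (forall l, (forall A, In A l -> F A) -> exists lx, (forall x, In x lx -> X x) /\
       forall A, In A l -> exists x, In x lx /\ A = (fun y => B (inv x ** y))) as Hr.
    { induction l0 as [|A l0 IH]; intros hl0.
      - exists []. split; intros ? [].
      - destruct IH as (lx & h1 & h2). intros; apply hl0; now right.
        destruct (hl0 A (or_introl eq_refl)) as (x & hx & ->).
        exists (x :: lx). split.
        + intros y [<- | hy]; auto.
        + intros A' [<- | hA']. exists x; split; auto. now left.
          destruct (h2 A' hA') as (y & ? & ?). exists y; split; auto. now right. }
    destruct (Hr l hl) as (lx & h1 & h2). exists lx. split; auto.
    intros h hh. destruct (hcov h hh) as (A & hA & hAh).
    destruct (h2 A hA) as (x & hx & ->). exists x, (inv x ** h). repeat split; auto. grp.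
Qed.

Lemma fi_restrict X K Y : fi X K -> sg Y -> subset Y X -> sg K -> fi Y (inter Y K).
Proof.
  intros (lx & hlx & hcov) hY hYX hK.
  assert (forall l : list G, exists ly, (forall y, In y ly -> Y y) /\
     forall g, In g l -> forall h k, Y h -> K k -> h = g ** k -> exists y, In y ly /\ K (inv y ** h)) as Hr.
  { induction l as [|g l IH].
    - exists []. split; intros ? [].
    - destruct IH as (ly & h1 & h2).
      destruct (classic (exists y, Y y /\ exists k, K k /\ y = g ** k)) as [(y & hy & k' & hk' & ->) | hn].
      + exists ((g ** k') :: ly). split.
        * intros z [<- | hz]; auto.
        * intros g' [<- | hg'] h k hh hk ->.
          -- exists (g ** k'). split; [now left|]. replace (inv (g ** k') ** (g ** k)) with (inv k' ** k) by grp.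
             apply sg_mul; auto. apply sg_inv; auto.
          -- destruct (h2 g' hg' _ k hh hk eq_refl) as (y & ? & ?). exists y; split; auto. now right.
      + exists ly. split; auto. intros g' [<- | hg'] h k hh hk ->.
        * exfalso. apply hn. exists (g ** k); eauto.
        * eauto. }
  destruct (Hr lx) as (ly & h1 & h2). exists ly. split; auto.
  intros h hh. destruct (hcov h (hYX h hh)) as (g & k & hg & hk & ->).
  destruct (h2 g hg (g ** k) k hh hk eq_refl) as (y & hy & hyk).
  exists y, (inv y ** (g ** k)). repeat split; auto.
  - apply sg_mul; auto. apply sg_inv; auto.
  - grp.
Qed.

Lemma fi_mono Y K1 K2 : fi Y K1 -> subset K1 K2 -> fi Y K2.
Proof. intros (l & h1 & h2) h. exists l; split; auto. intros x hx. destruct (h2 x hx) as (g & k & ? & ? & ?). exists g, k; auto. Qed.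

Definition bigI (l : list G) (f : G -> G -> Prop) := fun x => forall g, In g l -> f g x.
Lemma op_bigI l f : (forall g, op (f g)) -> op (bigI l f).
Proof.
  intro h. induction l as [|a l IH].
  - replace (bigI [] f) with (fun _ : G => True). apply op_True.
    apply set_ext; intro x; split; auto. intros _ g [].
  - replace (bigI (a :: l) f) with (inter (f a) (bigI l f)). apply op_inter; auto.
    apply set_ext; intro x; split.
    + intros [h1 h2] g [<- | hg]; auto.
    + intros h'. split. apply h'; now left. intros g hg; apply h'; now right.
Qed.

Definition core (P M : G -> Prop) := fun x => P x /\ forall p, P p -> M (inv p ** x ** p).

Lemma core_props P L M O : sg P -> sg L -> subset L P -> nin M L -> op O ->
  (forall x, M x <-> O x /\ P x) -> fi P L ->
  nin (core P M) P /\ subset (core P M) M /\ exists O', op O' /\ forall x, core P M x <-> O' x /\ P x.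
Proof.
  intros hP hL hLP hM hO hMO (l & hl & hcov).
  destruct hM as (hMs & hML & hMc).
  split; [|split].
  - split; [|split].
    + split; [|split].
      * split. now apply sg_e. intros p hp. replace (inv p ** e ** p) with e by grp. now apply sg_e.
      * intros x y [hx1 hx2] [hy1 hy2]. split. now apply sg_mul.
        intros p hp. replace (inv p ** (x ** y) ** p) with ((inv p ** x ** p) ** (inv p ** y ** p)) by grp.
        apply sg_mul; auto.
      * intros x [hx1 hx2]. split. now apply sg_inv.
        intros p hp. replace (inv p ** inv x ** p) with (inv (inv p ** x ** p)) by grp.
        apply sg_inv; auto.
    + intros x []; auto.
    + intros u n hu [hn1 hn2]. split. apply sg_mul; auto. apply sg_mul; auto. apply sg_inv; auto.
      intros p hp. replace (inv p ** (u ** n ** inv u) ** p) with (inv (inv u ** p) ** n ** (inv u ** p)) by grp.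
      apply hn2. apply sg_mul; auto. apply sg_inv; auto.
  - intros x [h1 h2]. specialize (h2 e (sg_e P hP)). revert h2. now grp.
  - exists (bigI l (fun g x => O (inv g ** x ** g))). split.
    + apply op_bigI. intro g. now apply op_conj.
    + intro x; split.
      * intros [h1 h2]. split; auto. intros g hg. apply hMO. apply h2. auto.
      * intros [h1 h2]. split; auto. intros p hp.
        destruct (hcov p hp) as (g & k & hg & hk & ->).
        assert (M (inv g ** x ** g)) as hm.
        { apply hMO. split. apply h1; auto. apply sg_mul; auto. apply sg_mul; auto. apply sg_inv; auto. }
        specialize (hMc (inv k) _ (sg_inv L k hL hk) hm).
        revert hMc. now grp.
Qed.

Lemma pronil_ext A B : A = B -> pronil A -> pronil B. Proof. now intros ->. Qed.

Lemma pronil_cl P : sg P -> pronil P -> pronil (cl P).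
Proof.
  intros hP hpn M hM (O & hO & hMO).
  destruct hM as (hMs & hMsub & hMc).
  assert (hclP : sg (cl P)) by now apply cl_sg.
  destruct (hpn (inter M P)) as (k & hk).
  - split; [|split].
    + apply sg_inter; auto.
    + intros x []; auto.
    + intros u n hu [hn1 hn2]. split. apply hMc; auto. apply sub_cl; auto.
      apply sg_mul; auto. apply sg_mul; auto. apply sg_inv; auto.
  - exists O. split; auto. intro x. unfold inter. rewrite hMO.
    split; [intros [[? ?] ?] | intros [? ?]]; repeat split; auto. apply sub_cl; auto.
  - exists k. intros x hx.
    assert (hxc : cl P x) by (eapply lc_sub; eauto).
    apply lc_cl in hx; auto.
    assert (hQ : op (fun z => O (inv z ** x))).
    { apply (Hic (fun w => O (w ** x))). now apply op_rmul. }
    destruct (proj1 (cl_char _ x) hx _ hQ) as (m & hm & hmO).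
    { cbv beta. rewrite inv_l. exact (proj1 (proj1 (hMO e) (sg_e M hMs))). }
    apply hk in hm. destruct hm as [hm1 hm2].
    assert (M (inv m ** x)).
    { apply hMO. split; auto. apply sg_mul; auto. apply sg_inv; auto. }
    replace x with (m ** (inv m ** x)) by grp. apply sg_mul; auto.
Qed.

Lemma pronil_inter P W : sg P -> pronil P -> sg W -> op W -> fi P (inter P W) -> pronil (inter P W).
Proof.
  intros hP hpn hW hWo hfi M hM (O & hO & hMO).
  destruct (core_props P (inter P W) M (inter O W)) as (hK & hKM & O' & hO' & hKO); auto.
  - apply sg_inter; auto.
  - intros x []; auto.
  - apply op_inter; auto.
  - intro x. rewrite hMO. unfold inter. tauto.
  - destruct (hpn (core P M) hK) as (k & hk). exists O'; auto.
    exists k. intros x hx. apply hKM, hk. eapply lc_mono; [|eauto]. intros y []; auto.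
Qed.

Definition triv := fun x => x = e.
Lemma sg_triv : sg triv.
Proof. unfold triv; split; [|split]; auto. intros x y -> ->; grp. intros x ->; grp. Qed.
Lemma nin_triv X : sg X -> nin triv X.
Proof. intro hX. split; [|split]. apply sg_triv. intros x ->. now apply sg_e. unfold triv. intros u n _ ->. grp. Qed.
Lemma pronil_triv : pronil triv.
Proof. intros M [hM _] _. exists 0. simpl. intros x ->. now apply sg_e. Qed.

Definition prodset (A B : G -> Prop) := fun x => exists a b, A a /\ B b /\ x = a ** b.
Definition GX (H X : G -> Prop) (i : nat) := match i with 0 => H | S i => lc X i end.

Section Fit.
Variables (H A B M : G -> Prop).
Hypothesis hH : sg H.
Hypothesis hA : sg A.
Hypothesis hB : sg B.
Hypothesis hAH : subset A H.
Hypothesis hBH : subset B H.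
Hypothesis hAn : forall u, H u -> cinv u A.
Hypothesis hBn : forall u, H u -> cinv u B.
Hypothesis hHAB : forall x, H x -> exists a b, A a /\ B b /\ x = a ** b.

Lemma GX_sg X i : sg X -> sg (GX H X i).
Proof. intro h. destruct i; simpl; auto. apply lc_sg; auto. Qed.
Lemma GX_sub X i : sg X -> subset X H -> subset (GX H X i) H.
Proof. intros h1 h2. destruct i; simpl. intros x; auto. intros x hx. apply h2. eapply lc_sub; eauto. Qed.
Lemma GX_cinv X i u : sg X -> (forall u, H u -> cinv u X) -> H u -> cinv u (GX H X i).
Proof.
  intros h1 h2 hu. destruct i; simpl.
  - intros x hx. apply sg_mul; auto. apply sg_mul; auto. apply sg_inv; auto.
  - apply lc_cinv; auto.
Qed.
Lemma GX_step X i x a : sg X -> subset X H -> (forall u, H u -> cinv u X) ->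
  GX H X i x -> X a -> GX H X (S i) (comm x a).
Proof.
  intros h1 h2 h3 hx ha. destruct i; simpl in *.
  - unfold commutator. replace (inv x ** inv a ** (x ** a)) with ((inv x ** inv a ** inv (inv x)) ** a) by grp.
    apply sg_mul; auto. apply h3. apply sg_inv; auto. apply sg_inv; auto.
  - apply gen_incl. exists x, a; auto.
Qed.
Lemma comm_norm Y x h : sg Y -> (forall u, H u -> cinv u Y) -> Y x -> H h -> Y (comm x h).
Proof.
  intros h1 h2 hx hh. unfold commutator.
  replace (inv x ** inv h ** (x ** h)) with (inv x ** (inv h ** x ** inv (inv h))) by grp.
  apply sg_mul; auto. apply sg_inv; auto. apply h2; auto. apply sg_inv; auto.
Qed.

Definition D i j := inter (GX H A i) (GX H B j).
Definition Q n := gen (fun z => exists i j, i + j = n /\ D i j z).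

Lemma D_sg i j : sg (D i j). Proof. apply sg_inter; apply GX_sg; auto. Qed.
Lemma D_sub i j : subset (D i j) H. Proof. intros x [hx _]. eapply GX_sub; [apply hA|auto|eauto]. Qed.
Lemma D_cinv i j u : H u -> cinv u (D i j).
Proof. intros hu x [h1 h2]. split; apply GX_cinv; auto. Qed.
Lemma Q_cinv n u : H u -> cinv u (Q n).
Proof. intro hu. apply gen_cinv. intros x (i & j & hij & hx). exists i, j; split; auto. apply D_cinv; auto. Qed.
Lemma Q_sg n : sg (Q n). Proof. apply gen_sg. Qed.

Lemma DA i j x a : D i j x -> A a -> D (S i) j (comm x a).
Proof.
  intros [h1 h2] ha. split.
  - apply GX_step; auto.
  - apply comm_norm; auto. apply GX_sg; auto. intros; apply GX_cinv; auto.
Qed.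
Lemma DB i j x b : D i j x -> B b -> D i (S j) (comm x b).
Proof.
  intros [h1 h2] hb. split.
  - apply comm_norm; auto. apply GX_sg; auto. intros; apply GX_cinv; auto.
  - apply GX_step; auto.
Qed.

Lemma Q_step n x h : Q n x -> H h -> Q (S n) (comm x h).
Proof.
  intros hx. revert h.
  set (T := fun x => H x /\ forall h, H h -> Q (S n) (comm x h)).
  enough (subset (Q n) T) as hT by (intros h hh; apply (hT x hx); auto).
  apply gen_min.
  - split; [|split].
    + split. now apply sg_e. intros h hh. unfold commutator. replace (inv e ** inv h ** (e ** h)) with e by grp.
      apply (sg_e (Q (S n))), Q_sg.
    + intros x1 y1 [hx1 hx2] [hy1 hy2]. split. apply sg_mul; auto. intros h hh.
      replace (comm (x1 ** y1) h) with ((inv y1 ** comm x1 h ** inv (inv y1)) ** comm y1 h) by (unfold commutator; grp).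
      apply (sg_mul (Q (S n))); auto using Q_sg. apply Q_cinv; auto. apply sg_inv; auto.
    + intros x1 [hx1 hx2]. split. apply sg_inv; auto. intros h hh.
      replace (comm (inv x1) h) with (x1 ** inv (comm x1 h) ** inv x1) by (unfold commutator; grp).
      apply Q_cinv; auto. apply (sg_inv (Q (S n))); auto using Q_sg.
  - intros z (i & j & hij & hz). split. eapply D_sub; eauto.
    intros h hh. destruct (hHAB h hh) as (a & b & ha & hb & ->).
    replace (comm z (a ** b)) with (comm z b ** (inv b ** comm z a ** inv (inv b))) by (unfold commutator; grp).
    apply (sg_mul (Q (S n))); auto using Q_sg.
    + apply gen_incl. exists i, (S j). split. lia. apply DB; auto.
    + apply Q_cinv. apply sg_inv; auto. apply gen_incl. exists (S i), j. split. lia. apply DA; auto.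
Qed.

Lemma lcH_Q k : subset (lc H k) (Q (S k)).
Proof.
  induction k; simpl.
  - intros x hx. destruct (hHAB x hx) as (a & b & ha & hb & ->).
    apply (sg_mul (Q 1)); auto using Q_sg; apply gen_incl.
    + exists 1, 0. split; auto. split; simpl; auto.
    + exists 0, 1. split; auto. split; simpl; auto.
  - apply gen_min. apply Q_sg. intros z (x & y & hx & hy & ->). apply Q_step; auto.
Qed.

Lemma fitting_alg a b : sg M -> subset (lc A a) M -> subset (lc B b) M -> subset (lc H (a + b + 1)) M.
Proof.
  intros hM ha hb x hx. apply lcH_Q in hx.
  revert x hx. apply gen_min; auto.
  intros z (i & j & hij & [h1 h2]).
  destruct (Compare_dec.le_lt_dec (S a) i).
  - destruct i as [|i]; [lia|]. simpl in h1. apply ha. eapply lc_anti; [auto| |eauto]. lia.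
  - destruct j as [|j]; [lia|]. simpl in h2. apply hb. eapply lc_anti; [auto| |eauto]. lia.
Qed.
End Fit.

Lemma prod_nin P1 P2 X : sg X -> nin P1 X -> nin P2 X -> nin (prodset P1 P2) X.
Proof.
  intros hX (h1 & h2 & h3) (k1 & k2 & k3). split; [|split].
  - split; [|split].
    + exists e, e. split; [apply (sg_e P1 h1)|split; [apply (sg_e P2 k1)| grp]].
    + intros x y (a & b & ha & hb & ->) (a' & b' & ha' & hb' & ->).
      exists (a ** a'), ((inv a' ** b ** inv (inv a')) ** b'). split; [|split].
      * apply sg_mul; auto.
      * apply sg_mul; auto. apply k3; auto. apply h2, sg_inv; auto.
      * grp.
    + intros x (a & b & ha & hb & ->). exists (inv a), (a ** inv b ** inv a). split; [|split].
      * apply sg_inv; auto.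
      * apply k3; auto. apply sg_inv; auto.
      * grp.
  - intros x (a & b & ha & hb & ->). apply sg_mul; auto.
  - intros u x hu (a & b & ha & hb & ->). exists (u ** a ** inv u), (u ** b ** inv u). repeat split; auto. grp.
Qed.

Lemma pronil_prod P1 P2 X : sg X -> nin P1 X -> nin P2 X -> pronil P1 -> pronil P2 -> pronil (prodset P1 P2).
Proof.
  intros hX hP1 hP2 hp1 hp2.
  pose proof (prod_nin P1 P2 X hX hP1 hP2) as hH.
  destruct hP1 as (h1 & h2 & h3), hP2 as (k1 & k2 & k3).
  assert (s1 : subset P1 (prodset P1 P2)). { intros a ha. exists a, e. split; [auto|split; [apply (sg_e P2 k1)| grp]]. }
  assert (s2 : subset P2 (prodset P1 P2)). { intros b hb. exists e, b. split; [apply (sg_e P1 h1)|split; [auto| grp]]. }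
  intros M hM (O & hO & hMO). destruct hM as (hMs & hMsub & hMc).
  assert (forall P, sg P -> subset P (prodset P1 P2) -> pronil P -> exists k, subset (lc P k) M) as Hpart.
  { intros P hP hPs hpP. destruct (hpP (inter M P)) as (k & hk).
    - split; [|split]. apply sg_inter; auto. intros x []; auto.
      intros u n hu [? ?]. split. apply hMc; auto. apply sg_mul; auto. apply sg_mul; auto. apply sg_inv; auto.
    - exists O. split; auto. intro x. unfold inter. rewrite hMO. split; intros [? ?]; try tauto. repeat split; auto.
    - exists k. intros x hx. apply hk; auto. }
  destruct (Hpart P1 h1 s1 hp1) as (a & ha). destruct (Hpart P2 k1 s2 hp2) as (b & hb).
  exists (a + b + 1). apply (fitting_alg (prodset P1 P2) P1 P2 M); auto.
  - destruct hH; auto.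
  - intros u hu x hx. apply h3; auto. destruct hH as (_ & hs & _). auto.
  - intros u hu x hx. apply k3; auto. destruct hH as (_ & hs & _). auto.
Qed.

Local Notation cs g A := (conj_set mul inv g A).

Lemma cs_cs g A : cs (inv g) (cs g A) = A.
Proof. apply set_ext; intro x. unfold conj_set. replace (inv g ** (inv (inv g) ** x ** inv g) ** g) with x by grp. tauto. Qed.
Lemma cs_cs' g A : cs g (cs (inv g) A) = A.
Proof. apply set_ext; intro x. unfold conj_set. replace (inv (inv g) ** (inv g ** x ** g) ** inv g) with x by grp. tauto. Qed.

Lemma cs_sg g A : sg A -> sg (cs g A).
Proof.
  unfold conj_set. intro h. split; [|split].
  - grp. now apply sg_e.
  - intros x y hx hy. replace (inv g ** (x ** y) ** g) with ((inv g ** x ** g) ** (inv g ** y ** g)) by grp. apply sg_mul; auto.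
  - intros x hx. replace (inv g ** inv x ** g) with (inv (inv g ** x ** g)) by grp. apply sg_inv; auto.
Qed.

Lemma cs_op g A : op A -> op (cs g A).
Proof. intro h. unfold conj_set. now apply op_conj. Qed.
Lemma cs_closed g A : closed op A -> closed op (cs g A).
Proof. unfold closed. intro h. apply (cs_op g (fun x => ~ A x)); auto. Qed.

Lemma cs_gen g S : gen (cs g S) = cs g (gen S).
Proof.
  apply set_ext; intro x; split.
  - revert x. apply gen_min. apply cs_sg, gen_sg. intros y hy. apply gen_incl. auto.
  - intro hx. assert (subset (gen S) (cs (inv g) (gen (cs g S)))) as h.
    { apply gen_min. apply cs_sg, gen_sg. intros y hy. apply gen_incl. rewrite <- (cs_cs g S) in hy. exact hy. }
    apply h in hx. unfold conj_set in hx. revert hx. grp. auto.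
Qed.

Lemma cs_comm g x y : inv g ** comm x y ** g = comm (inv g ** x ** g) (inv g ** y ** g).
Proof. unfold commutator. grp. Qed.

Lemma cs_lc g N k : lc (cs g N) k = cs g (lc N k).
Proof.
  induction k; simpl; auto. rewrite <- cs_gen. f_equal.
  apply set_ext; intro z; split.
  - intros (x & y & hx & hy & ->). rewrite IHk in hx. unfold conj_set in *. rewrite cs_comm. eauto.
  - intros (x & y & hx & hy & hz). unfold conj_set in hz.
    exists (inv (inv g) ** x ** inv g), (inv (inv g) ** y ** inv g). rewrite IHk. unfold conj_set.
    repeat split.
    + revert hx; grp; auto.
    + revert hy; grp; auto.
    + replace z with (inv (inv g) ** (inv g ** z ** g) ** inv g) by grp. rewrite hz.
      unfold commutator. grp.
Qed.

Lemma cs_cl g S : cl (cs g S) = cs g (cl S).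
Proof.
  apply set_ext; intro x. rewrite cl_char. unfold conj_set at 2. rewrite cl_char. split.
  - intros h O hO hx. destruct (h (cs g O) (cs_op _ _ hO) hx) as (y & hy & hOy).
    exists (inv g ** y ** g). split; auto.
  - intros h O hO hx. destruct (h (cs (inv g) O) (cs_op _ _ hO)) as (y & hy & hOy).
    + unfold conj_set. revert hx; grp; auto.
    + exists (inv (inv g) ** y ** inv g). unfold conj_set. split; [revert hy | revert hOy]; unfold conj_set; grp; auto.
Qed.

Lemma cs_nin g N U : nin N U -> nin (cs g N) (cs g U).
Proof.
  intros (h1 & h2 & h3). split; [|split]. now apply cs_sg.
  intros x hx; apply h2; auto.
  unfold conj_set. intros u n hu hn.
  replace (inv g ** (u ** n ** inv u) ** g) with ((inv g ** u ** g) ** (inv g ** n ** g) ** inv (inv g ** u ** g)) by grp.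
  auto.
Qed.

Lemma cs_relopen g N M : rel_open op N M -> rel_open op (cs g N) (cs g M).
Proof. intros (O & hO & h). exists (cs g O). split. now apply cs_op. intro x. unfold conj_set. apply h. Qed.

Lemma cs_pronil g N : pronil N -> pronil (cs g N).
Proof.
  intros h M hM hr.
  destruct (h (cs (inv g) M)) as (k & hk).
  - rewrite <- (cs_cs g N). now apply cs_nin.
  - rewrite <- (cs_cs g N). now apply cs_relopen.
  - exists k. rewrite cs_lc. intros x hx. apply hk in hx. unfold conj_set in hx. revert hx. grp. auto.
Qed.

Lemma cs_fit g U : fit (cs g U) = cs g (fit U).
Proof.
  unfold fitting. rewrite <- cs_cl, <- cs_gen. f_equal. f_equal.
  apply set_ext; intro x; split.
  - intros (N & hN & hc & hp & hx). unfold conj_set at 1. exists (cs (inv g) N).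
    split; [|split; [|split]].
    + rewrite <- (cs_cs g U). now apply cs_nin.
    + now apply cs_closed.
    + now apply cs_pronil.
    + revert hx. unfold conj_set. grp. auto.
  - intros (N & hN & hc & hp & hx). exists (cs g N). split; [|split; [|split]]; auto.
    now apply cs_nin. now apply cs_closed. now apply cs_pronil.
Qed.

Lemma cs_compact g U : compact op U -> compact op (cs g U).
Proof.
  intros hU F hF hcov.
  set (F' := fun B => exists A, F A /\ B = cs (inv g) A).
  destruct (hU F') as (l & hl & hc).
  - intros B (A & hA & ->). apply cs_op; auto.
  - intros x hx. destruct (hcov (inv (inv g) ** x ** inv g)) as (A & hA & hAx).
    + unfold conj_set. grp. auto.
    + exists (cs (inv g) A). split. exists A; auto. exact hAx.
  - assert (forall l, (forall B, In B l -> F' B) -> exists lA, (forall A, In A lA -> F A) /\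
       forall B, In B l -> exists A, In A lA /\ B = cs (inv g) A) as Hr.
    { induction l0 as [|B l0 IH]; intros hl0.
      - exists []. split; intros ? [].
      - destruct IH as (lA & h1 & h2). intros; apply hl0; now right.
        destruct (hl0 B (or_introl eq_refl)) as (A & hA & ->).
        exists (A :: lA). split.
        + intros y [<- | hy]; auto.
        + intros B' [<- | hB']. exists A; split; auto. now left.
          destruct (h2 B' hB') as (y & ? & ?). exists y; split; auto. now right. }
    destruct (Hr l hl) as (lA & h1 & h2). exists lA. split; auto.
    intros y hy. destruct (hc (inv g ** y ** g) hy) as (B & hB & hBy).
    destruct (h2 B hB) as (A & hA & ->). exists A. split; auto. revert hBy. unfold conj_set. grp. auto.
Qed.

Local Notation gensof U := (fun x => exists N, nin N U /\ closed op N /\ pronil N /\ N x).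

Lemma fit_sg U : sg (fit U). Proof. apply cl_sg, gen_sg. Qed.
Lemma fit_sub U : sg U -> op U -> subset (fit U) U.
Proof.
  intros h1 h2. apply cl_min. now apply open_sg_closed.
  apply gen_min; auto. intros x (N & (_ & hN & _) & _ & _ & hx). auto.
Qed.

Lemma lemmaK X W : sg X -> op X -> sg W -> op W -> nin W X -> fi X W ->
  subset (inter (fit X) W) (fit W) /\ subset (fit W) (fit X).
Proof.
  intros hX hXo hW hWo hWX hfi.
  assert (hXc : closed op X) by now apply open_sg_closed.
  assert (hWc : closed op W) by now apply open_sg_closed.
  destruct hWX as (hW1 & hWs & hWn).
  split.
  - set (T := fun x => exists P, nin P X /\ closed op P /\ pronil P /\ P x).
    assert (hT : sg T).
    { split; [|split].
      - exists (cl triv). split; [|split; [|split]].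
        + apply cl_nin; auto. now apply nin_triv.
        + apply closed_cl.
        + apply pronil_cl. apply sg_triv. apply pronil_triv.
        + apply sub_cl. reflexivity.
      - intros x y (P1 & h1 & c1 & p1 & x1) (P2 & h2 & c2 & p2 & y2).
        pose proof (prod_nin P1 P2 X hX h1 h2) as hp.
        exists (cl (prodset P1 P2)). split; [|split; [|split]].
        + apply cl_nin; auto.
        + apply closed_cl.
        + apply pronil_cl. destruct hp; auto. now apply (pronil_prod P1 P2 X).
        + apply sub_cl. exists x, y; auto.
      - intros x (P & h & c & p & hx). exists P. split; [|split; [|split]]; auto.
        destruct h as [hs _]. now apply sg_inv. }
    intros x [hx hxW].
    assert (cl T x) as hxT.
    { revert hx. apply cl_mono. apply gen_min; auto. intros y hy. exact hy. }
    pose proof (cl_inter_open T W x hxT hWo hxW) as hc.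
    revert hc. apply cl_mono. intros y [(P & hP & hPc & hPp & hy) hyW]. apply gen_incl.
    exists (inter P W). split; [|split; [|split]].
    + destruct hP as (hP1 & hP2 & hP3). split; [|split].
      * apply sg_inter; auto.
      * intros z []; auto.
      * intros u n hu [hn1 hn2]. split. apply hP3; auto. apply sg_mul; auto. apply sg_mul; auto. apply sg_inv; auto.
    + apply closed_inter; auto.
    + destruct hP as (hP1 & hP2 & hP3). apply pronil_inter; auto.
      apply (fi_restrict X W P); auto.
    + split; auto.
  - destruct hfi as (l & hl & hcov).
    apply cl_min. apply closed_cl. apply gen_min. apply fit_sg.
    intros n (N & hN & hNc & hNp & hn).
    destruct hN as (hN1 & hN2 & hN3).
    assert (hcsN : forall g, X g -> nin (cs g N) W).
    { intros g hg. split; [|split].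
      - now apply cs_sg.
      - intros y hy. unfold conj_set in hy.
        replace y with (g ** (inv g ** y ** g) ** inv g) by grp. apply hWn; auto.
      - intros u y hu hy. unfold conj_set in *.
        replace (inv g ** (u ** y ** inv u) ** g) with ((inv g ** u ** inv (inv g)) ** (inv g ** y ** g) ** inv (inv g ** u ** inv (inv g))) by grp.
        apply hN3; auto. apply hWn; auto. now apply sg_inv. }
    set (prodl := fix prodl (l : list G) := match l with [] => triv | g :: l => prodset (cs g N) (prodl l) end).
    assert (hpl : forall l, (forall g, In g l -> X g) -> nin (prodl l) W /\ pronil (prodl l)).
    { induction l0 as [|g l0 IH]; intro hl0; simpl.
      - split. now apply nin_triv. apply pronil_triv.
      - destruct IH as [IH1 IH2]. intros; apply hl0; now right.
        assert (X g) by (apply hl0; now left).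
        split. apply prod_nin; auto. apply (pronil_prod _ _ W); auto. now apply cs_pronil. }
    assert (hcont : forall l g0 y, (forall g, In g l -> X g) -> In g0 l -> cs g0 N y -> prodl l y).
    { induction l0 as [|g l0 IH]; intros g0 y hl0 hin hy; [destruct hin|].
      assert (hs : sg (prodl l0)). { apply hpl. intros; apply hl0; now right. }
      simpl. destruct hin as [<- | hin].
      - exists y, e. split; auto. split. exact (sg_e _ hs). grp.
      - exists e, y. split. exact (sg_e _ (cs_sg g N hN1)). split. apply (IH g0); auto. intros; apply hl0; now right. grp. }
    set (Q' := gen (fun y => exists g, X g /\ N (inv g ** y ** g))).
    assert (hQ : Q' = prodl l).
    { apply set_ext; intro y; split.
      - revert y. apply gen_min. apply hpl; auto.
        intros y (g & hg & hy). destruct (hcov g hg) as (g0 & k & hg0 & hk & ->).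
        apply (hcont l g0); auto. unfold conj_set.
        replace (inv g0 ** y ** g0) with (k ** (inv (g0 ** k) ** y ** (g0 ** k)) ** inv k) by grp.
        apply hN3; auto.
      - assert (forall l, (forall g, In g l -> X g) -> subset (prodl l) Q') as hh.
        { induction l0 as [|g l0 IH]; intros hl0 z hz; simpl in hz.
          - rewrite hz. apply (sg_e Q'), gen_sg.
          - destruct hz as (a & b & ha & hb & ->). apply (sg_mul Q'). apply gen_sg.
            + apply gen_incl. exists g. split. apply hl0; now left. exact ha.
            + apply IH; auto. intros; apply hl0; now right. }
        apply hh; auto. }
    assert (hQn : nin Q' X).
    { split; [|split].
      - apply gen_sg.
      - apply gen_min; auto. intros y (g & hg & hy).
        replace y with (g ** (inv g ** y ** g) ** inv g) by grp.
        apply sg_mul; auto. apply sg_mul; auto. apply sg_inv; auto.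
      - intros u y hu hy. apply (gen_cinv u); auto. intros z (g & hg & hz).
        exists (u ** g). split. apply sg_mul; auto. revert hz. grp. auto. }
    assert (hQp : pronil Q'). { rewrite hQ. apply hpl; auto. }
    apply sub_cl. apply gen_incl. exists (cl Q'). split; [|split; [|split]].
    + apply cl_nin; auto.
    + apply closed_cl.
    + apply pronil_cl; auto. apply gen_sg.
    + apply sub_cl. apply gen_incl. exists e. split. now apply sg_e. grp. auto.
Qed.

Lemma core_open X B : sg X -> op X -> compact op X -> sg B -> op B -> subset B X ->
  exists W, nin W X /\ op W /\ subset W B.
Proof.
  intros hX hXo hXc hB hBo hBX.
  destruct (core_props X B B B) as (hK & hKB & O & hO & hKO); auto.
  - split; [|split]; auto. intros x; auto. intros u n hu hn. apply sg_mul; auto. apply sg_mul; auto. apply sg_inv; auto.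
  - intro x. split; [intro h; split; auto | intros []; auto].
  - now apply fi_compact.
  - exists (core X B). split; auto. split; auto.
    replace (core X B) with (inter O X). apply op_inter; auto.
    apply set_ext; intro x. rewrite hKO. unfold inter. tauto.
Qed.

Lemma main_lemma U V : sg U -> op U -> compact op U -> sg V -> op V -> compact op V ->
  commensurate mul (fit U) (fit V).
Proof.
  intros hU hUo hUc hV hVo hVc.
  assert (hA : sg (inter U V)) by now apply sg_inter.
  destruct (core_open U (inter U V)) as (W1 & hW1 & hW1o & hW1A); auto.
  apply op_inter; auto. intros x []; auto.
  assert (hW1s : sg W1) by (destruct hW1; auto).
  assert (hW1U : subset W1 U) by (intros x hx; apply hW1A in hx; destruct hx; auto).
  assert (hW1V : subset W1 V) by (intros x hx; apply hW1A in hx; destruct hx; auto).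
  destruct (core_open V W1) as (W2 & hW2 & hW2o & hW21); auto.
  assert (hW2s : sg W2) by (destruct hW2; auto).
  assert (hW2V : subset W2 V) by (destruct hW2 as (_ & h & _); auto).
  assert (hW2n1 : nin W2 W1).
  { destruct hW2 as (h1 & h2 & h3). split; [|split]; auto. }
  assert (fiUW1 : fi U W1) by now apply fi_compact.
  assert (fiVW2 : fi V W2) by now apply fi_compact.
  assert (fiUW2 : fi U W2) by now apply fi_compact.
  assert (fiW1W2 : fi W1 W2).
  { apply (fi_mono W1 (inter W1 W2)). apply (fi_restrict V W2 W1); auto. intros x []; auto. }
  destruct (lemmaK U W1) as (a1 & b1); auto.
  destruct (lemmaK W1 W2) as (a2 & b2); auto.
  destruct (lemmaK V W2) as (a3 & b3); auto.
  split.
  - apply (fi_mono _ (inter (fit U) W2)).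
    + apply (fi_restrict U W2 (fit U)); auto. apply fit_sg. apply fit_sub; auto.
    + intros x [hx hxW]. split; auto. apply b3, a2. split; auto. apply a1. split; auto.
  - apply (fi_mono _ (inter (fit V) W2)).
    + apply (fi_restrict V W2 (fit V)); auto. apply fit_sg. apply fit_sub; auto.
    + intros x [hx hxW]. split; auto. apply b1, b2, a3. split; auto.
Qed.

End S.

Theorem mainTheorem11 (G : Type) (mul : G -> G -> G) (inv : G -> G) (e : G)
  (op : (G -> Prop) -> Prop)
  (HG : tdlcsc_group mul inv e op)
  (U V : G -> Prop)
  (HU : compact_open_subgroup mul inv e op U)
  (HV : compact_open_subgroup mul inv e op V) :
  commensurate mul (fitting mul inv e op U) (fitting mul inv e op V) /\
  (forall g : G, commensurate mul (conj_set mul inv g (fitting mul inv e op U))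
                                  (fitting mul inv e op U)).
Proof.
  destruct HG as [[Hgrp [Htop [Hmc Hic]]] _].
  destruct HU as (hU & hUc & hUo). destruct HV as (hV & hVc & hVo).
  split.
  - eapply main_lemma; eauto.
  - intro g. rewrite <- (cs_fit G mul inv e op Hgrp Htop Hmc g U).
    eapply main_lemma; eauto.
    + eapply cs_sg; eauto.
    + eapply cs_op; eauto.
    + eapply cs_compact; eauto.
Qed.
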